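(* Let $g:(0,\infty)\to(0,\infty)$ be three times continuously differentiable with $g(t)=t\,g(1/t)$ for all $t>0$, let $\mu$ be a symmetric probability density on $\mathbb{R}$ with $\int_{\mathbb{R}}g^{(j)}(e^{sw})\mu(w)dw<\infty$ for all $s>0$ and $j\in\{0,1,2,3\}$, and let $f$ be a smooth positive probability density on $\mathbb{R}$ with $\phi=\log f$. Then for all $x_i,u_i\in\mathbb{R}$, $\log\Big(\frac{f(x_i+\sigma u_i)}{f(x_i)}\frac{g(e^{-\phi'(x_i+\sigma u_i)\sigma u_i})}{g(e^{\phi'(x_i)\sigma u_i})}\Big)=\mathcal{O}(\sigma^3)$ as $\sigma\to0$.
   Context: $g^{(j)}$ is the $j$-th derivative of $g$. *)

(* Defs.v *)
From HB Require Import structures.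
From mathcomp Require Import all_boot all_order all_algebra.
From mathcomp Require Import all_classical all_reals all_analysis.
Set Implicit Arguments. Unset Strict Implicit. Unset Printing Implicit Defensive.
Import Order.TTheory GRing.Theory Num.Theory.
Import numFieldNormedType.Exports.
Local Open Scope classical_set_scope.
Local Open Scope ring_scope.

Definition C3_pos {R : realType} (g : R -> R) : Prop :=
  (forall k : nat, (k < 3)%N -> forall t : R, 0 < t -> derivable (derive1n k g) t 1)
  /\ (forall t : R, 0 < t -> {for t, continuous (derive1n 3 g)}).

Definition smooth {R : realType} (f : R -> R) : Prop :=
  forall (n : nat) (x : R), derivable (derive1n n f) x 1.

Definition prob_density {R : realType} (p : R -> R) : Prop :=
  (forall x, 0 <= p x) /\ measurable_fun setT p /\
  (\int[lebesgue_measure]_x (p x)%:E = 1)%E.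

Definition symmetric_fun {R : realType} (p : R -> R) : Prop :=
  forall w, p (- w) = p w.

(* Main.v *)
Require Import Defs.
From HB Require Import structures.
From mathcomp Require Import all_boot all_order all_algebra.
From mathcomp Require Import all_classical all_reals all_analysis.
From mathcomp Require Import ring lra.
Import Order.TTheory GRing.Theory Num.Theory.
Import numFieldNormedType.Exports.
Local Open Scope classical_set_scope.
Local Open Scope ring_scope.


Section S.
Variable R : realType.
Implicit Types h k : R -> R.

Lemma der_cont h x : derivable h x 1 -> {for x, continuous h}.
Proof. by move/derivable1_diffP/differentiable_continuous. Qed.

Lemma derive1D_fun h k : (forall x, derivable h x 1) -> (forall x, derivable k x 1) ->
  derive1 (fun x => h x + k x) = fun x => derive1 h x + derive1 k x.
Proof.
move=> dh dk; apply/funext => x; rewrite !derive1E.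
exact: (deriveD (dh x) (dk x)).
Qed.

Lemma derive1M_fun h k : (forall x, derivable h x 1) -> (forall x, derivable k x 1) ->
  derive1 (fun x => h x * k x) = fun x => derive1 h x * k x + h x * derive1 k x.
Proof.
move=> dh dk; apply/funext => x; rewrite !derive1E.
by rewrite (deriveM (dh x) (dk x)) /= addrC mulrC.
Qed.

Definition Cn n h := (forall m, (m < n)%N -> forall x, derivable (derive1n m h) x 1)
  /\ continuous (derive1n n h).

Lemma Cn_S n h : Cn n.+1 h <-> (forall x, derivable h x 1) /\ Cn n (derive1 h).
Proof.
rewrite /Cn derive1Sn; split.
  move=> [D C]; split; first exact: (D 0%N).
  split=> // m mn; rewrite -derive1Sn; exact: D.
move=> [d [D C]]; split=> // -[|m] mn //; rewrite derive1Sn; exact: D.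
Qed.

Lemma CnW n h : Cn n.+1 h -> Cn n h.
Proof.
move=> [D C]; split; first by move=> m mn; apply: D; apply: ltnW.
by move=> x; apply: der_cont; apply: D.
Qed.

Lemma Cn_deriv n h : Cn n.+1 h -> Cn n (derive1 h).
Proof. by case/Cn_S. Qed.

Lemma Cn_der n h : Cn n.+1 h -> forall x, derivable h x 1.
Proof. by case/Cn_S. Qed.

Lemma Cn_add n : forall h k, Cn n h -> Cn n k -> Cn n (fun x => h x + k x).
Proof.
elim: n => [|n IH] h k.
  move=> [_ ch] [_ ck]; split=> // x; exact: cvgD (ch x) (ck x).
move=> /Cn_S[dh Ch] /Cn_S[dk Ck]; apply/Cn_S; split.
  by move=> x; apply: derivableD.
by rewrite derive1D_fun //; apply: IH.
Qed.

Lemma Cn_cst n : forall a : R, Cn n (fun _ => a).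
Proof.
elim: n => [|n IH] a; first by split=> // x; exact: cvg_cst.
apply/Cn_S; split; first by move=> x; exact: derivable_cst.
have -> : derive1 (fun _ : R => a) = fun _ => 0.
  by apply/funext => x; rewrite derive1E; exact: derive_cst.
exact: IH.
Qed.

Lemma Cn_mul n : forall h k, Cn n h -> Cn n k -> Cn n (fun x => h x * k x).
Proof.
elim: n => [|n IH] h k.
  move=> [_ ch] [_ ck]; split=> // x; exact: cvgM (ch x) (ck x).
move=> Hh Hk; have /Cn_S[dh Ch] := Hh; have /Cn_S[dk Ck] := Hk.
apply/Cn_S; split.
  by move=> x; apply: derivableM.
rewrite derive1M_fun //; apply: Cn_add; apply: IH => //; exact: CnW.
Qed.

End S.
Arguments Cn {R}.
Arguments der_cont {R h x}.


Section S2.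
Variable R : realType.
Implicit Types h k : R -> R.

Lemma Cn_inv n : forall k, (forall x, k x != 0) -> Cn n k -> Cn n (fun x => (k x)^-1).
Proof.
elim: n => [|n IH] k k0.
  move=> [_ ck]; split=> // x; exact: cvgV (k0 x) (ck x).
move=> Hk; have /Cn_S[dk Ck] := Hk.
apply/Cn_S; split.
  by move=> x; apply: derivableV.
have -> : derive1 (fun x => (k x)^-1) =
   fun x => (-1) * (derive1 k x * ((k x)^-1 * (k x)^-1)).
  apply/funext => x; rewrite !derive1E deriveV //.
  by rewrite /GRing.scale /= expr2 invfM; ring.
apply: Cn_mul; first exact: Cn_cst.
apply: Cn_mul => //; apply: Cn_mul; apply: IH => //; exact: CnW.
Qed.

Lemma Cn_ln n k : (forall x, 0 < k x) -> Cn n k -> Cn n (fun x => ln (k x)).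
Proof.
move=> k0; case: n => [|n].
  move=> [_ ck]; split=> // x.
  exact: (continuous_comp (ck x) (continuous_ln (k0 x))).
move=> Hk; have /Cn_S[dk Ck] := Hk.
have dl : forall x : R, is_derive x (1:R) (fun x => ln (k x)) ((k x)^-1 * derive1 k x).
  move=> x; rewrite derive1E.
  exact: (is_derive1_comp (is_derive1_ln (k0 x)) (derivableP (dk x))).
apply/Cn_S; split.
  by move=> x; have [] := dl x.
have -> : derive1 (fun x => ln (k x)) = fun x => derive1 k x * (k x)^-1.
  apply/funext => x; rewrite derive1E; have [_ ->] := dl x; by rewrite mulrC.
apply: Cn_mul => //; apply: Cn_inv => //; last exact: CnW.
by move=> x; rewrite gt_eqF.
Qed.

Lemma Cn_exp n : Cn n (@expR R).
Proof.
have de : derive1 (@expR R) = expR.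
  apply/funext => x; rewrite derive1E; by have [_ ->] := is_derive_expR x.
elim: n => [|n IH]; first by split=> //; exact: continuous_expR.
apply/Cn_S; split; first by move=> x; have [] := is_derive_expR x.
by rewrite de.
Qed.

Lemma Cn_gexp n : forall g : R -> R,
  (forall m, (m < n)%N -> forall t, 0 < t -> derivable (derive1n m g) t 1) ->
  (forall t, 0 < t -> {for t, continuous (derive1n n g)}) ->
  Cn n (fun s => g (expR s)).
Proof.
elim: n => [|n IH] g D C.
  split=> // s; exact: (continuous_comp (@continuous_expR R s) (C _ (expR_gt0 s))).
have dl : forall s : R, is_derive s (1:R) (fun s => g (expR s)) (derive1 g (expR s) * expR s).
  move=> s; rewrite derive1E.
  exact: (is_derive1_comp (derivableP (D 0%N isT _ (expR_gt0 s))) (is_derive_expR s)).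
apply/Cn_S; split.
  by move=> x; have [] := dl x.
have -> : derive1 (fun s => g (expR s)) = fun s => derive1 g (expR s) * expR s.
  by apply/funext => x; rewrite derive1E; have [_ ->] := dl x.
apply: Cn_mul; last exact: Cn_exp.
apply: IH.
  by move=> m mn t t0; rewrite -derive1Sn; apply: D.
by move=> t t0; rewrite -derive1Sn; apply: C.
Qed.
End S2.


Section M.
Variable R : realType.

Lemma mvt_key (F : R -> R) (a b : R) : (forall t, derivable F t 1) -> a <= b ->
  exists2 xi, xi \in `[a, b] & F b - F a = derive1 F xi * (b - a).
Proof.
move=> dF ab; apply: MVT_segment => //.
  by move=> t _; rewrite derive1E; apply: derivableP.
apply/continuous_subspaceT => r; exact: der_cont.
Qed.

Lemma mvt_bound (F : R -> R) c d K n : 0 <= K -> (forall t, derivable F t 1) -> F c = 0 ->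
  (forall t, `|t - c| <= d -> `|derive1 F t| <= K * `|t - c| ^+ n) ->
  forall t, `|t - c| <= d -> `|F t| <= K * `|t - c| ^+ n.+1.
Proof.
move=> K0 dF Fc HB t td.
have main : forall xi, `|xi - c| <= `|t - c| -> `|F t| = `|derive1 F xi| * `|t - c| ->
    `|F t| <= K * `|t - c| ^+ n.+1.
  move=> xi xic ->; rewrite exprSr mulrA ler_wpM2r //.
  apply: le_trans (HB xi (le_trans xic td)) _.
  by rewrite ler_wpM2l // lerXn2r // nnegrE.
case: (leP c t) => [ct | tc].
  have [xi xin E] := mvt_key _ _ _ dF ct.
  move: xin; rewrite in_itv /= => /andP[cx xt].
  apply: (main xi).
    by rewrite !ger0_norm ?subr_ge0 // lerD2r.
  by rewrite -[F t]subr0 -Fc E normrM.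
have [xi xin E] := mvt_key _ _ _ dF (ltW tc).
move: xin; rewrite in_itv /= => /andP[tx xc].
apply: (main xi).
  by rewrite !ler0_norm ?subr_le0 ?(ltW tc) // lerN2 lerD2r.
have -> : F t = - (F c - F t) by rewrite Fc sub0r opprK.
by rewrite E normrN normrM distrC.
Qed.
End M.


Section N.
Variable R : realType.

Lemma near_to_ball (c : R) (P : R -> Prop) : (\forall t \near c, P t) ->
  exists2 d, 0 < d & forall t, `|t - c| <= d -> P t.
Proof.
move=> /nbhs_ballP [e /= e0 H]; exists (e / 2); first by rewrite divr_gt0.
move=> t td; apply: H; rewrite /ball /= distrC.
by apply: le_lt_trans td _; rewrite ltr_pdivrMr // ltr_pMr // ltr1n.
Qed.

Lemma ball_to_near (c : R) (P : R -> Prop) d : 0 < d ->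
  (forall t, `|t - c| <= d -> P t) -> \forall t \near c, P t.
Proof.
move=> d0 H; apply/nbhs_ballP; exists d => // t; rewrite /ball /= distrC => /ltW.
exact: H.
Qed.

Lemma cont_bound (h : R -> R) c : {for c, continuous h} ->
  exists2 d, 0 < d & forall t, `|t - c| <= d -> `|h t| <= `|h c| + 1.
Proof.
move=> hc; have := @cvgr_dist_lt _ _ _ (nbhs c) _ h (h c) hc 1 ltr01 => Hn.
have [d d0 H] := near_to_ball c (fun t => `|h c - h t| < 1) (Hn _).
exists d => // t /H ht.
have -> : h t = h c - (h c - h t) by ring.
by apply: le_trans (ler_normB _ _) _; rewrite lerD2l ltW.
Qed.
End N.
Arguments cont_bound {R h c}. Arguments near_to_ball {R c P}. Arguments ball_to_near {R c P d}.


Section H.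
Variable R : realType.
Implicit Types h k : R -> R.

Definition HD h h' := forall y : R, is_derive y (1:R) h (h' y).

Lemma HD_add h h' k k' : HD h h' -> HD k k' ->
  HD (fun y => h y + k y) (fun y => h' y + k' y).
Proof. move=> H K y; exact: (is_deriveD (H y) (K y)). Qed.

Lemma HD_opp h h' : HD h h' -> HD (fun y => - h y) (fun y => - h' y).
Proof. move=> H y; exact: (is_deriveN (H y)). Qed.

Lemma HD_mul h h' k k' : HD h h' -> HD k k' ->
  HD (fun y => h y * k y) (fun y => h y * k' y + k y * h' y).
Proof. move=> H K y; exact: (is_deriveM (H y) (K y)). Qed.

Lemma HD_cst (a : R) : HD (fun _ => a) (fun _ => 0).
Proof. move=> y; exact: is_derive_cst. Qed.

Lemma HD_id : HD (fun y => y) (fun _ => 1).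
Proof. move=> y; exact: is_derive_id. Qed.

Lemma HD_eq h h1 h2 : HD h h1 -> (forall y, h1 y = h2 y) -> HD h h2.
Proof. by move=> H E y; rewrite -E. Qed.

Lemma HD_derivable h h' : HD h h' -> forall y, derivable h y 1.
Proof. by move=> H y; have [] := H y. Qed.

Lemma HD_derive1 h h' : HD h h' -> forall y, derive1 h y = h' y.
Proof. by move=> H y; rewrite derive1E; have [_ ->] := H y. Qed.

Lemma HD_of h : (forall y, derivable h y 1) -> HD h (derive1 h).
Proof. by move=> D y; rewrite derive1E; apply: derivableP. Qed.

Lemma mvtHD (F F' : R -> R) c d K n : 0 <= K -> HD F F' -> F c = 0 ->
  (forall t, `|t - c| <= d -> `|F' t| <= K * `|t - c| ^+ n) ->
  forall t, `|t - c| <= d -> `|F t| <= K * `|t - c| ^+ n.+1.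
Proof.
move=> K0 H Fc B; apply: mvt_bound => //; first exact: HD_derivable _ _ H.
by move=> t td; rewrite (HD_derive1 _ _ H); apply: B.
Qed.


End H.
Arguments HD_derivable {R h h'}.
Arguments HD_derive1 {R h h'}.
Arguments HD_eq {R h h1 h2}.
Arguments HD {R}.
Ltac hd := repeat first [ exact: HD_id | eassumption | apply: HD_add | apply: HD_opp
  | apply: HD_mul | apply: HD_cst ].
Arguments mvtHD {R F F' c d K n}.


Section C.
Variable R : realType.

Lemma trap (p p1 p2 p3 : R -> R) x : HD p p1 -> HD p1 p2 -> HD p2 p3 ->
  {for x, continuous p3} ->
  exists2 d, 0 < d & exists2 K, 0 <= K & forall y, `|y - x| <= d ->
    `|p y - p x - (y - x) * (p1 x + p1 y) / 2| <= K * `|y - x| ^+ 3.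
Proof.
move=> Hp Hp1 Hp2 c3.
have [d d0 Hb] := cont_bound c3.
have K0 : 0 <= (`|p3 x| + 1) / 2 by rewrite divr_ge0 // addr_ge0.
exists d => //; exists ((`|p3 x| + 1) / 2) => //.
have HA1 : HD (fun y => (p1 y - p1 x) / 2 - (y - x) * p2 y / 2)
              (fun y => - ((y - x) * p3 y) / 2).
  by apply: HD_eq; [hd | move=> y /=; field].
have HA : HD (fun y => p y - p x - (y - x) * (p1 x + p1 y) / 2)
             (fun y => (p1 y - p1 x) / 2 - (y - x) * p2 y / 2).
  by apply: HD_eq; [hd | move=> y /=; field].
apply: (mvtHD K0 HA); first by rewrite /= subrr; field.
apply: (mvtHD K0 HA1); first by rewrite /= !subrr; field.
move=> t /Hb tb; rewrite expr1 normrM normrN normrM.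
have -> : `|(2:R)^-1| = 2^-1 by rewrite ger0_norm // invr_ge0.
have := normr_ge0 (t - x); nra.
Qed.

Lemma lip (p1 p2 p3 : R -> R) x : HD p1 p2 -> HD p2 p3 ->
  exists2 d, 0 < d & exists2 L, 0 <= L & forall y, `|y - x| <= d ->
    `|p1 y - p1 x| <= L * `|y - x|.
Proof.
move=> Hp1 Hp2.
have c2 : {for x, continuous p2} := der_cont (HD_derivable Hp2 x).
have [d d0 Hb] := cont_bound c2.
have L0 : 0 <= `|p2 x| + 1 by rewrite addr_ge0.
exists d => //; exists (`|p2 x| + 1) => // y yd.
have HF : HD (fun y => p1 y - p1 x) p2 by apply: HD_eq; [hd | move=> z /=; field].
have := mvtHD (n := 0) L0 HF (subrr _) _ y yd; rewrite expr1; apply.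
by move=> t /Hb; rewrite expr0 mulr1.
Qed.

Lemma taylorE (G G1 G2 G3 : R -> R) : HD G G1 -> HD G1 G2 -> HD G2 G3 ->
  {for 0, continuous G3} -> G1 0 = 2^-1 ->
  exists2 d, 0 < d & exists2 K, 0 <= K & forall s, `|s| <= d ->
    `|G s - s / 2 - G 0 - G2 0 / 2 * (s * s)| <= K * `|s| ^+ 3.
Proof.
move=> HG HG1 HG2 c3 Gh.
have [d d0 Hb] := cont_bound c3.
have M0 : 0 <= `|G3 0| + 1 by rewrite addr_ge0.
exists d => //; exists (`|G3 0| + 1) => // s sd.
have HP2 : HD (fun s => G2 s - G2 0) G3 by apply: HD_eq; [hd | move=> z /=; field].
have HP1 : HD (fun s => G1 s - 2^-1 - G2 0 * s) (fun s => G2 s - G2 0).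
  by apply: HD_eq; [hd | move=> z /=; field].
have HP : HD (fun s => G s - s / 2 - G 0 - G2 0 / 2 * (s * s))
             (fun s => G1 s - 2^-1 - G2 0 * s).
  by apply: HD_eq; [hd | move=> z /=; field].
have B2 : forall t, `|t - 0| <= d -> `|G2 t - G2 0| <= (`|G3 0| + 1) * `|t - 0| ^+ 1.
  by apply: (mvtHD M0 HP2 (subrr _)) => t /Hb; rewrite expr0 mulr1.
have P10 : G1 0 - 2^-1 - G2 0 * 0 = 0 by rewrite Gh mulr0 !subr0 subrr.
have B1 := mvtHD M0 HP1 P10 B2.
have P0 : G 0 - 0 / 2 - G 0 - G2 0 / 2 * (0 * 0) = 0 by field.
have B0 := mvtHD M0 HP P0 B1.
by have := B0 s; rewrite !subr0; apply.
Qed.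
End C.
Arguments trap {R p p1 p2 p3 x}. Arguments lip {R p1 p2 p3}. Arguments taylorE {R G G1 G2 G3}.


Section K.
Variable R : realType.

Lemma comb (p p1 p2 p3 G G1 G2 G3 : R -> R) x :
  HD p p1 -> HD p1 p2 -> HD p2 p3 -> {for x, continuous p3} ->
  HD G G1 -> HD G1 G2 -> HD G2 G3 -> {for 0, continuous G3} -> G1 0 = 2^-1 ->
  (forall s, G (- s) = G s - s) ->
  exists2 d, 0 < d & exists2 K, 0 <= K & forall h, `|h| <= d ->
    `|p (x + h) - p x + (G (- (p1 (x + h) * h)) - G (p1 x * h))| <= K * `|h| ^+ 3.
Proof.
move=> Hp Hp1 Hp2 c3 HG HG1 HG2 cG3 Gh Gsym.
have [dA dA0 [KA KA0 HA]] := trap Hp Hp1 Hp2 c3.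
have [dL dL0 [L L0 HL]] := lip x Hp1 Hp2.
have [dE dE0 [KE KE0 HE]] := taylorE HG HG1 HG2 cG3 Gh.
set a := p1 x.
set B1 := `|a| + L * dL + 1.
have B10 : 0 < B1 by rewrite /B1 ltr_wpDl // addr_ge0 // mulr_ge0 // ltW.
set c := G2 0 / 2.
exists (Num.min dA (Num.min dL (dE / B1))).
  by rewrite !lt_min dA0 dL0 divr_gt0.
exists (KA + 2 * (KE * B1 ^+ 3) + `|c| * (L * (2 * B1))).
  have h1 : 0 <= KE * B1 ^+ 3 by rewrite mulr_ge0 // exprn_ge0 // ltW.
  have h2 : 0 <= `|c| * (L * (2 * B1)) by rewrite mulr_ge0 // mulr_ge0 // mulr_ge0 // ltW.
  lra.
move=> h; rewrite !le_min => /andP[hA /andP[hL hE]].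
rewrite ler_pdivlMr // in hE.
set b := p1 (x + h).
have xh : x + h - x = h by ring.
have hb : `|b - a| <= L * `|h| by have := HL (x + h); rewrite xh; apply.
have bB : `|b| <= B1.
  have -> : b = a + (b - a) by ring.
  apply: le_trans (ler_normD _ _) _; rewrite /B1 -addrA lerD2l.
  apply: le_trans hb _; apply: ler_wpDr => //; exact: ler_wpM2l.
have aB : `|a| <= B1 by rewrite /B1 -addrA lerDl addr_ge0 // mulr_ge0 // ltW.
set P := fun s => G s - s / 2 - G 0 - c * (s * s).
have HP : forall s, `|s| <= B1 -> `|P (s * h)| <= KE * B1 ^+ 3 * `|h| ^+ 3.
  move=> s sB.
  have shB : `|s * h| <= B1 * `|h| by rewrite normrM ler_wpM2r.
  apply: le_trans (HE _ _) _; first by apply: le_trans shB _; rewrite mulrC.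
  rewrite -mulrA -exprMn ler_wpM2l // lerXn2r // nnegrE //.
  by rewrite mulr_ge0 // ltW.
have E : p (x + h) - p x + (G (- (b * h)) - G (a * h)) =
   (p (x + h) - p x - (x + h - x) * (a + b) / 2) + P (b * h) - P (a * h)
   + c * (h * h) * ((b - a) * (b + a)).
  by rewrite Gsym /P /c; field.
rewrite E.
have T4 : `|c * (h * h) * ((b - a) * (b + a))| <= `|c| * (L * (2 * B1)) * `|h| ^+ 3.
  have u1 : `|b - a| * `|b + a| <= L * `|h| * (2 * B1).
    apply: ler_pM => //; apply: le_trans (ler_normD _ _) _; lra.
  have -> : `|c * (h * h) * ((b - a) * (b + a))| =
     `|c| * (`|h| * `|h|) * (`|b - a| * `|b + a|) by rewrite !normrM.
  apply: le_trans (ler_wpM2l _ u1) _; first by rewrite mulr_ge0 // mulr_ge0.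
  by rewrite le_eqVlt; apply/orP; left; apply/eqP; ring.
have T1 := HA (x + h); rewrite xh in T1.
have T2 := HP _ bB; have T3 := HP _ aB.
apply: le_trans (ler_normD _ _) _.
apply: le_trans (lerD (ler_normD _ _) (lexx _)) _.
apply: le_trans (lerD (lerD (ler_normD _ _) (lexx _)) (lexx _)) _.
rewrite normrN.
have := T1 hA; rewrite -/a -/b => T1h; rewrite xh; lra.
Qed.
End K.
Arguments comb {R p p1 p2 p3 G G1 G2 G3}.


Section F.
Variable R : realType.
Lemma Cn3 (h : R -> R) : Cn 3 h ->
  [/\ HD h (derive1 h), HD (derive1 h) (derive1 (derive1 h)),
      HD (derive1 (derive1 h)) (derive1 (derive1 (derive1 h))) &
      continuous (derive1 (derive1 (derive1 h)))].
Proof.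
move=> /Cn_S[d0 /Cn_S[d1 /Cn_S[d2 [_ c3]]]].
split; [exact: (HD_of _ _ d0) | exact: (HD_of _ _ d1) | exact: (HD_of _ _ d2) | exact: c3].
Qed.

Lemma half_deriv (G G1 : R -> R) : HD G G1 -> (forall s, G (- s) = G s - s) -> G1 0 = 2^-1.
Proof.
move=> HG Gs.
have EQ : (fun s => G (- s)) = (fun s => G s - s) by apply/funext => s; apply: Gs.
have H1 : is_derive (0:R) (1:R) (fun s => G (- s)) (G1 (- 0) * -1).
  have := @is_derive1_comp R G -%R 0 _ _ (HG (- 0)) (is_deriveNid (0:R) (1:R)).
  exact.
rewrite EQ in H1.
have H2 : HD (fun s => G s - s) (fun s => G1 s - 1).
  by apply: HD_eq; [hd | move=> y /=; field].
have [_ e1] := H1; have [_ e2] := H2 0.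
rewrite e2 oppr0 in e1; lra.
Qed.
End F.



Theorem lemma12 (R : realType) (g mu f : R -> R)
  (g_pos : forall t : R, 0 < t -> 0 < g t)
  (g_C3 : C3_pos g)
  (g_sym : forall t : R, 0 < t -> g t = t * g t^-1)
  (mu_dens : prob_density mu) (mu_sym : symmetric_fun mu)
  (mu_int : forall s : R, 0 < s -> forall j : nat, (j <= 3)%N ->
     lebesgue_measure.-integrable setT
       (fun w : R => (derive1n j g (expR (s * w)) * mu w)%:E))
  (f_smooth : smooth f) (f_pos : forall x, 0 < f x) (f_dens : prob_density f)
  (x u : R) :
  let phi := fun y : R => ln (f y) in
  (fun sigma : R =>
     ln (f (x + sigma * u) / f x *
         (g (expR (- derive1 phi (x + sigma * u) * (sigma * u))) /
          g (expR (derive1 phi x * (sigma * u))))))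
    =O_ (0 : R) (fun sigma : R => sigma ^+ 3).
Proof.
move=> phi.
have Cf : Cn 3 f.
  split; first by move=> m _ y; apply: f_smooth.
  by move=> y; apply: der_cont; apply: f_smooth.
have Cphi : Cn 3 phi := Cn_ln _ _ _ f_pos Cf.
have [Hp Hp1 Hp2 c3] := Cn3 _ _ Cphi.
case: g_C3 => gD gC.
have Ck : Cn 3 (fun s => g (expR s)) := Cn_gexp _ _ _ gD gC.
have kpos : forall s : R, 0 < g (expR s) by move=> s; apply: g_pos; apply: expR_gt0.
set G := fun s => ln (g (expR s)).
have CG : Cn 3 G := Cn_ln _ _ _ kpos Ck.
have [HG HG1 HG2 cG3] := Cn3 _ _ CG.
have Gsym : forall s, G (- s) = G s - s.
  move=> s; rewrite /G (g_sym _ (expR_gt0 s)) -expRN lnM ?expRK; first ring.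
    by rewrite posrE expR_gt0.
  by rewrite posrE.
have Gh := half_deriv _ _ _ HG Gsym.
have [d d0 [K K0 HK]] := comb x Hp Hp1 Hp2 (c3 x) HG HG1 HG2 (cG3 0) Gh Gsym.
apply/eqO_exP.
exists (K * (`|u| + 1) ^+ 3 + 1).
  by rewrite ltr_wpDl // mulr_ge0 // exprn_ge0 // addr_ge0.
have u10 : 0 < `|u| + 1 by rewrite ltr_wpDl.
apply: (ball_to_near (d := d / (`|u| + 1))); first by rewrite divr_gt0.
move=> s; rewrite subr0 => sd0.
have sd : `|s| * (`|u| + 1) <= d by rewrite -ler_pdivlMr.
have hsd : `|s * u| <= d.
  by apply: le_trans sd; rewrite normrM ler_wpM2l // lerDl ler01.

have HKs := HK _ hsd.
have fp : forall y, f y \is Num.pos by move=> y; rewrite posrE.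
have gp : forall y, g (expR y) \is Num.pos by move=> y; rewrite posrE.
rewrite lnM ?ln_div ?rpred_div //.

rewrite mulNr.
move: HKs; rewrite /phi /G /= => HKs.
apply: le_trans HKs _.
rewrite normrX normrM exprMn.
have hu : `|u| ^+ 3 <= (`|u| + 1) ^+ 3.
  by rewrite lerXn2r ?nnegrE ?addr_ge0 // lerDl.
have s3 : 0 <= `|s| ^+ 3 by rewrite exprn_ge0.
have h1 : K * `|s| ^+ 3 * `|u| ^+ 3 <= K * `|s| ^+ 3 * (`|u| + 1) ^+ 3.
  by rewrite ler_wpM2l // mulr_ge0.
lra.
Qed.
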